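(* Let $\mathcal{H}$ be a hierarchical generator with lineage $\mathcal{L}$. Among all absorbing hierarchical generators $\mathcal{H}_*$ whose lineage $\mathcal{L}_*$ contains $\mathcal{L}$, there is a least one $\tilde{\mathcal{H}}$, with lineage $\tilde{\mathcal{L}}$, in the sense that $\tilde{\mathcal{L}}\subset\mathcal{L}_*$ for every such $\mathcal{H}_*$. Moreover, with $\mathcal{R}=\tilde{\mathcal{L}}\setminus\mathcal{L}$: (i) every $\psi\in\mathcal{R}$ satisfies $\mathbb{I}(\psi)\subset\mathbb{I}(\mathcal{L}^{\ell_\psi})$; (ii) $\mathrm{depth}(\tilde{\mathcal{L}})=\mathrm{depth}(\mathcal{L})$; (iii) for every $\psi\in\mathcal{R}$ there is $k>0$ with $\mathcal{O}(\psi,k,\mathcal{H})\neq\emptyset$.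
   Context: Fix integers $d\ge1$, $n\ge2$, $m\ge2$; $s=n-1$, $p=m-1$. B-splines $\varphi^\ell_{\vec i}(\vec x)=\prod_kQ(n^\ell x_k-i_k)$ for $\ell\ge0$, $\vec i\in\mathbb{Z}^d$, $Q$ the uniform B-spline of order $m$ with knots $0,\dots,m$; $\mathfrak{B}$ the set of all of them, $\ell_\varphi$ the level; $\mathcal{B}^0=\{\varphi^0_{\vec i}:\vec i\in[-p:0]^d\}$. Children $\mathrm{ch}(\varphi^\ell_{\vec i})=\{\varphi^{\ell+1}_{\vec k}:n\vec i\le\vec k\le n\vec i+sm\}$, extended to sets by union. Cells $I^\ell_{\vec i}=\prod_k[i_kn^{-\ell},(i_k+1)n^{-\ell})$, cell children $\mathrm{ch}(I^\ell_{\vec i})=\{I^{\ell+1}_{\vec k}:n\vec i\le\vec k\le n\vec i+s\}$, $\mathrm{ch}^k$ iterated, $\mathrm{ch}^{-k}(I)=\{J:I\in\mathrm{ch}^k(J)\}$. Cell support $\mathbb{I}(\varphi^\ell_{\vec i})=\{I^\ell_{\vec k}:\vec i\le\vec k\le\vec i+p\}$, $\mathbb{I}^k(\varphi)=\mathrm{ch}^k(\mathbb{I}(\varphi))$ for $k\in\mathbb{Z}$, $\mathbb{B}^k(I)=\{\varphi\in\mathfrak{B}:I\in\mathbb{I}^{-k}(\varphi)\}$, all extended to sets by union; $\mathcal{O}(\psi,k,\mathcal{H})=\mathbb{B}^k(\mathbb{I}(\psi))\cap\mathcal{H}$. A lineage is a finite $\mathcal{L}\subset\mathfrak{B}$ with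 $\mathcal{L}\subset\mathcal{B}^0\cup\mathrm{ch}(\mathcal{L})$; its hierarchical generator is $\mathcal{H}=(\mathcal{B}^0\cup\mathrm{ch}(\mathcal{L}))\setminus\mathcal{L}$ (the lineage is uniquely determined by the generator). $\mathcal{L}^\ell$ is the set of level-$\ell$ elements of $\mathcal{L}$, and $\mathrm{depth}(\mathcal{L})=\min\{\ell:\mathcal{L}^\ell=\emptyset\}$. $\mathcal{H}$ is absorbing if there is no $\varphi\in\mathcal{H}$ with $\mathbb{I}(\varphi)\subset\mathbb{I}(\mathcal{L})$. *)

(* Defs.v *)
From mathcomp Require Import all_boot all_order all_algebra.
Set Implicit Arguments. Unset Strict Implicit. Unset Printing Implicit Defensive.
Import Order.TTheory GRing.Theory Num.Theory.

(* A B-spline phi^l_i (resp. a cell I^l_i) is identified with its pair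
   (level l, index vector i in Z^d).  Sets are predicates. *)
Definition idx (d : nat) := {ffun 'I_d -> int}.
Definition bspline (d : nat) := (nat * idx d)%type.
Definition cell (d : nat) := (nat * idx d)%type.
Definition bset (d : nat) := bspline d -> Prop.
Definition cset (d : nat) := cell d -> Prop.

Definition level {d} (phi : bspline d) : nat := phi.1.

Local Open Scope ring_scope.

Definition finite_set {d} (S : bset d) : Prop :=
  exists s : seq (bspline d), forall x, S x -> x \in s.

Definition subset_b {d} (A B : bset d) : Prop := forall x, A x -> B x.
Definition subset_c {d} (A B : cset d) : Prop := forall x, A x -> B x.

Definition B0 {d} (m : nat) : bset d := fun phi =>
  phi.1 = 0%N /\ forall j, - (m.-1)%:Z <= phi.2 j <= 0.

Definition bchild {d} (n m : nat) (phi psi : bspline d) : Prop :=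
  psi.1 = phi.1.+1 /\
  forall j, n%:Z * phi.2 j <= psi.2 j <= n%:Z * phi.2 j + (n.-1 * m)%N%:Z.

Definition chB {d} (n m : nat) (S : bset d) : bset d :=
  fun psi => exists2 phi, S phi & bchild n m phi psi.

Definition cchild {d} (n : nat) (I J : cell d) : Prop :=
  J.1 = I.1.+1 /\
  forall j, n%:Z * I.2 j <= J.2 j <= n%:Z * I.2 j + (n.-1)%:Z.

Fixpoint chk {d} (n : nat) (k : nat) (I J : cell d) : Prop :=
  match k with
  | 0%N => J = I
  | k'.+1 => exists2 I', cchild n I I' & chk n k' I' J
  end.

Definition supp {d} (m : nat) (phi : bspline d) : cset d := fun I =>
  I.1 = phi.1 /\ forall j, phi.2 j <= I.2 j <= phi.2 j + (m.-1)%:Z.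

Definition suppS {d} (m : nat) (S : bset d) : cset d :=
  fun I => exists2 phi, S phi & supp m phi I.

Definition chZ {d} (n : nat) (k : int) (A : cset d) : cset d := fun J =>
  exists2 I, A I &
    match k with
    | Posz k' => chk n k' I J
    | Negz k' => chk n k'.+1 J I
    end.

Definition suppk {d} (n m : nat) (k : int) (phi : bspline d) : cset d :=
  chZ n k (supp m phi).

Definition Bk {d} (n m : nat) (k : int) (A : cset d) : bset d :=
  fun phi => exists2 I, A I & suppk n m (- k) phi I.

Definition Ov {d} (n m : nat) (psi : bspline d) (k : int) (H : bset d) : bset d :=
  fun phi => Bk n m k (supp m psi) phi /\ H phi.

Definition lineage {d} (n m : nat) (L : bset d) : Prop :=
  finite_set L /\ forall phi, L phi -> B0 m phi \/ chB n m L phi.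

(* hierarchical generator of a lineage: (B^0 \cup ch(L)) \ L *)
Definition gen {d} (n m : nat) (L : bset d) : bset d :=
  fun phi => (B0 m phi \/ chB n m L phi) /\ ~ L phi.

(* the generator of L is absorbing *)
Definition absorbing {d} (n m : nat) (L : bset d) : Prop :=
  ~ exists phi, gen n m L phi /\ subset_c (supp m phi) (suppS m L).

Definition at_level {d} (L : bset d) (l : nat) : bset d :=
  fun phi => L phi /\ level phi = l.

Definition is_depth {d} (L : bset d) (D : nat) : Prop :=
  (forall phi, ~ at_level L D phi) /\
  (forall l, (l < D)%N -> exists phi, at_level L l phi).

(* Main.v *)
Require Import Defs.
From mathcomp Require Import all_boot all_order all_algebra.
From mathcomp Require Import zify.
From Stdlib Require Import Classical.
Import Order.TTheory GRing.Theory Num.Theory.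
Local Open Scope ring_scope.

Definition closedP {d} n m (L P : bset d) : Prop :=
  subset_b L P /\ forall phi, (B0 m phi \/ chB n m P phi) ->
     subset_c (supp m phi) (suppS m P) -> P phi.

Definition Cl {d} n m (L : bset d) : bset d :=
  fun phi => forall P, closedP n m L P -> P phi.

Lemma chB_mono {d} n m (A B : bset d) : subset_b A B -> subset_b (chB n m A) (chB n m B).
Proof. move=> h x [y /h hy hc]; by exists y. Qed.

Lemma suppS_mono {d} m (A B : bset d) : subset_b A B -> subset_c (suppS m A) (suppS m B).
Proof. move=> h x [y /h hy hc]; by exists y. Qed.

Lemma Cl_L {d} n m (L : bset d) : subset_b L (Cl n m L).
Proof. by move=> x hx P [hP _]; apply: hP. Qed.

Lemma Cl_min {d} n m (L P : bset d) : closedP n m L P -> subset_b (Cl n m L) P.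
Proof. by move=> hP x hx; apply: hx. Qed.

Lemma Cl_step {d} n m (L P : bset d) phi : subset_b P (Cl n m L) ->
  (B0 m phi \/ chB n m P phi) -> subset_c (supp m phi) (suppS m P) -> Cl n m L phi.
Proof.
move=> hPC h1 h2 Q hQ; have hCQ := @Cl_min d n m L Q hQ.
apply: hQ.2.
  case: h1 => [?|h]; [by left | right; apply: chB_mono h => x /hPC; apply: hCQ].
move=> I /h2; apply: suppS_mono => x /hPC; apply: hCQ.
Qed.

Lemma corner {d} m (phi : bspline d) : supp m phi (phi.1, phi.2).
Proof. split=> // j; by rewrite lexx lerDl. Qed.

Definition Inv {d} m (L : bset d) (phi : bspline d) : Prop :=
  L phi \/ subset_c (supp m phi) (suppS m (at_level L (level phi))).

Lemma Cl_inv {d} n m (L : bset d) phi : Cl n m L phi -> Inv m L phi.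
Proof.
move=> h; suff: Cl n m L phi /\ Inv m L phi by case.
apply: (h (fun phi => Cl n m L phi /\ Inv m L phi)); split.
  by move=> x hx; split; [apply: Cl_L | left].
move=> x h1 h2; split.
  by apply: (@Cl_step d n m L (fun phi => Cl n m L phi /\ Inv m L phi)) => // y [].
right=> I hI; case: (h2 I hI) => y [_ [hy|hy]] hyI.
  exists y => //; split => //; rewrite /level -hyI.1 hI.1 //.
case: (hy I hyI) => z [hz hzl] hzI; exists z => //; split => //.
by rewrite hzl /level -hyI.1 hI.1.
Qed.

Definition box {d} m (psi : bspline d) : seq (bspline d) :=
  [seq (psi.1, [ffun j => psi.2 j + (nat_of_ord (f j))%:Z]) | f : {ffun 'I_d -> 'I_m} <- enum {ffun 'I_d -> 'I_m}].

Lemma in_box {d} m (psi phi : bspline d) : (0 < m)%N -> phi.1 = psi.1 ->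
  (forall j, psi.2 j <= phi.2 j <= psi.2 j + (m.-1)%:Z) -> phi \in box m psi.
Proof.
case: m => // m' _ h1 h2; apply/mapP.
exists [ffun j => inord (absz (phi.2 j - psi.2 j)) : 'I_m'.+1].
  by rewrite mem_enum.
case: phi h1 h2 => l v /= -> h2; congr pair; apply/ffunP => j; rewrite !ffunE inordK.
  by have /= := h2 j; lia.
by have /= := h2 j; lia.
Qed.

Lemma Cl_finite {d} n m (L : bset d) : (0 < m)%N -> finite_set L -> finite_set (Cl n m L).
Proof.
move=> hm [s hs]; exists (s ++ flatten [seq box m psi | psi <- s]) => x /Cl_inv [hx|hx].
  by rewrite mem_cat hs.
case: (hx _ (corner m x)) => y [hy hyl] hyx.
rewrite mem_cat; apply/orP; right; apply/flatten_mapP; exists y; first exact: hs.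
case: hyx => /= e1 e2; exact: (@in_box d m y x hm e1 e2).
Qed.

Lemma Cl_lineage {d} n m (L : bset d) : (0 < m)%N -> lineage n m L -> lineage n m (Cl n m L).
Proof.
move=> hm [hf hL]; split; first exact: Cl_finite.
move=> phi h.
suff: Cl n m L phi /\ (B0 m phi \/ chB n m (Cl n m L) phi) by case.
apply: (h (fun phi => Cl n m L phi /\ (B0 m phi \/ chB n m (Cl n m L) phi))); split.
  move=> x hx; split; first exact: Cl_L.
  case: (hL x hx) => [?|h1]; [by left | right; apply: chB_mono h1; apply: Cl_L].
move=> x h1 h2; split.
  by apply: (@Cl_step d n m L (fun phi => Cl n m L phi /\ (B0 m phi \/ chB n m (Cl n m L) phi))) => // y [].
case: h1 => [?|h1]; [by left | right; apply: chB_mono h1 => y []; done].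
Qed.

Lemma Cl_absorbing {d} n m (L : bset d) : absorbing n m (Cl n m L).
Proof.
move=> [phi [[h1 h2] h3]]; apply: h2.
by apply: (@Cl_step d n m L (Cl n m L)).
Qed.

Lemma Cl_least {d} n m (L Ls : bset d) : lineage n m Ls -> subset_b L Ls ->
  absorbing n m Ls -> subset_b (Cl n m L) Ls.
Proof.
move=> _ hLs hab; apply: Cl_min; split => // phi h1 h2.
case: (classic (Ls phi)) => // hn; exfalso; apply: hab.
by exists phi; split => //; split.
Qed.

Lemma Cl_level {d} n m (L : bset d) l :
  (exists phi, at_level (Cl n m L) l phi) <-> (exists phi, at_level L l phi).
Proof.
split; last first.
  by case=> phi [h1 h2]; exists phi; split => //; apply: Cl_L.
case=> phi [/Cl_inv [h|h] hl]; first by exists phi.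
case: (h _ (corner m phi)) => y [hy hyl] _; exists y; split => //; by rewrite hyl.
Qed.

Lemma Cl_depth {d} n m (L : bset d) D : is_depth (Cl n m L) D <-> is_depth L D.
Proof.
split=> [[h1 h2]|[h1 h2]]; split.
- by move=> phi [a b]; apply: (h1 phi); split => //; apply: Cl_L.
- by move=> l /h2 /Cl_level.
- move=> phi hphi.
  have [y hy] : exists phi, at_level L D phi by apply/(Cl_level n m); exists phi.
  exact: h1 hy.
- by move=> l /h2 /(Cl_level n m).
Qed.

Lemma bound_levels {d} (s : seq (bspline d)) : exists N, forall x, x \in s -> (x.1 < N)%N.
Proof.
elim: s => [|a s [N hN]]; first by exists 0%N.
exists (maxn a.1.+1 N) => x; rewrite in_cons => /orP [/eqP ->|/hN H]; by rewrite leq_max ?ltnSn ?H ?orbT.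
Qed.

Lemma descent {d} n m (L : bset d) N : (1 < n)%N -> (1 < m)%N ->
  (forall phi, L phi -> (phi.1 < N)%N) ->
  forall t (phi0 : bspline d) (J : cell d), (N - phi0.1 <= t)%N -> L phi0 -> supp m phi0 J ->
  exists k, exists phi, exists2 J', gen n m L phi /\ supp m phi J' & chk n k.+1 J J'.
Proof.
move=> hn hm hN; elim=> [|t IH] phi0 J ht hL hJ.
  by have := hN _ hL; lia.
pose J1 : cell d := (J.1.+1, [ffun j => n%:Z * J.2 j]).
pose phi1 : bspline d := (phi0.1.+1, [ffun j => n%:Z * J.2 j - (J.2 j - phi0.2 j)]).
have hc : cchild n J J1.
  split => // j; rewrite /J1 /= ffunE lexx /=; lia.
have hb : bchild n m phi0 phi1.
  split => // j; rewrite /phi1 /= ffunE; have := hJ.2 j; nia.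
have hs : supp m phi1 J1.
  split; first by rewrite /J1 /phi1 /= hJ.1.
  move=> j; rewrite /J1 /phi1 /= !ffunE; have := hJ.2 j; lia.
case: (classic (L phi1)) => h1.
  have := hN _ hL => hl.
  case: (IH phi1 J1 _ h1 hs); first by rewrite /phi1 /=; lia.
  move=> k [phi [J' h2 h3]]; exists k.+1, phi; exists J' => //; by exists J1.
exists 0%N, phi1; exists J1; last by exists J1.
by split => //; split => //; right; exists phi0.
Qed.

Theorem lemma6p10 (d n m : nat) (hd : (1 <= d)%N) (hn : (2 <= n)%N)
    (hm : (2 <= m)%N) (L : bset d) :
  lineage n m L ->
  exists Lt : bset d,
    lineage n m Lt /\ subset_b L Lt /\ absorbing n m Lt /\
        (* least among absorbing generators whose lineage contains L *)
        (forall Ls : bset d, lineage n m Ls -> subset_b L Ls ->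
           absorbing n m Ls -> subset_b Lt Ls) /\
        (* (i) *)
        (forall psi, Lt psi -> ~ L psi ->
           subset_c (supp m psi) (suppS m (at_level L (level psi)))) /\
        (* (ii) *)
        (forall D, is_depth Lt D <-> is_depth L D) /\
        (* (iii) *)
        (forall psi, Lt psi -> ~ L psi ->
           exists k : int, 0 < k /\ exists phi, Ov n m psi k (gen n m L) phi).
Proof.
move=> hL; have hm0 : (0 < m)%N by lia.
exists (Cl n m L); split; first exact: Cl_lineage.
split; first exact: Cl_L.
split; first exact: Cl_absorbing.
split; first by move=> Ls; apply: Cl_least.
split; first by move=> psi /Cl_inv [].
split; first by move=> D; apply: Cl_depth.
move=> psi /Cl_inv [//|hi] hnL.
case: (hi _ (corner m psi)) => phi0 [hphi0 hl] hc.
case: hL => [[s hs] _]; case: (bound_levels s) => N hN.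
have hN' : forall phi, L phi -> (phi.1 < N)%N by move=> phi /hs /hN.
case: (@descent d n m L N hn hm hN' (N - phi0.1)%N phi0 _ (leqnn _) hphi0 hc) => k [phi [J' [hg hs'] hch]].
exists (Posz k.+1); split; first by [].
exists phi; split => //.
exists (psi.1, psi.2); first exact: corner.
rewrite /suppk -NegzE; by exists J'.
Qed.
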